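(* For every NFA $\mathcal A$, the relation $S(\subseteq^{\mathrm{bw}},\supseteq^{\mathrm{bw}})$ is good for saturation, i.e. $\mathcal L(\mathrm{Sat}(\mathcal A,S(\subseteq^{\mathrm{bw}},\supseteq^{\mathrm{bw}})))=\mathcal L(\mathcal A)$.
   Context: An NFA $\mathcal A=(\Sigma,Q,I,F,\delta)$, $\delta\subseteq Q\times\Sigma\times Q$; its language is the set of finite words with a finite trace starting in $I$ and ending in $F$. Backward finite trace inclusion: $p\subseteq^{\mathrm{bw}}q$ iff for every finite word $w$, if some $w$-trace starting in $I$ ends in $p$, then some $w$-trace starting in $I$ ends in $q$; $\supseteq^{\mathrm{bw}}$ is its inverse. Let $\Delta=Q\times\Sigma\times Q$; $S(R_b,R_f)=\{((p,\sigma,r),(p',\sigma,r'))\in\Delta\times\Delta:p\,R_b\,p',\ r\,R_f\,r'\}$. For reflexive $S\subseteq\Delta\times\Delta$, $\mathrm{Sat}(\mathcal A,S)=(\Sigma,Q,I,F,\{t'\in\Delta:\exists t\in\delta,(t',t)\in S\})$. *)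

(* Defs.v *)
From mathcomp Require Import all_boot.
Set Implicit Arguments. Unset Strict Implicit. Unset Printing Implicit Defensive.

Record NFA (Sigma Q : finType) := mkNFA {
  init : {set Q};
  final : {set Q};
  delta : Q * Sigma * Q -> Prop }.

Fixpoint run (Sigma Q : finType) (d : Q * Sigma * Q -> Prop) (p : Q) (w : seq Sigma) (q : Q) : Prop :=
  match w with
  | [::] => p = q
  | a :: w' => exists r, d (p, a, r) /\ run d r w' q
  end.

Definition lang (Sigma Q : finType) (A : NFA Sigma Q) (w : seq Sigma) : Prop :=
  exists p q, p \in init A /\ q \in final A /\ run (delta A) p w q.

Definition bw_incl (Sigma Q : finType) (A : NFA Sigma Q) (p q : Q) : Prop :=
  forall w : seq Sigma,
    (exists i, i \in init A /\ run (delta A) i w p) ->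
    (exists i, i \in init A /\ run (delta A) i w q).

Definition bw_sup (Sigma Q : finType) (A : NFA Sigma Q) (p q : Q) : Prop :=
  bw_incl A q p.

Definition Srel (Sigma Q : finType) (Rb Rf : Q -> Q -> Prop)
  (t t' : Q * Sigma * Q) : Prop :=
  let: (p, s, r) := t in let: (p', s', r') := t' in
  s = s' /\ Rb p p' /\ Rf r r'.

Definition Sat (Sigma Q : finType) (A : NFA Sigma Q)
  (S : Q * Sigma * Q -> Q * Sigma * Q -> Prop) : NFA Sigma Q :=
  mkNFA (init A) (final A)
    (fun t' => exists2 t, delta A t & S t' t).

(* Main.v *)
Require Import Defs.
From mathcomp Require Import all_boot.

Lemma run_rcons (Sigma Q : finType) (d : Q * Sigma * Q -> Prop) p u m a r :
  run d p u m -> d (m, a, r) -> run d p (rcons u a) r.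
Proof.
elim: u p => [|b u IH] p /=.
  by move=> ->; exists r.
by move=> [x [Hx Hr]] Hd; exists x; split => //; apply: IH.
Qed.

Lemma run_mono (Sigma Q : finType) (d d' : Q * Sigma * Q -> Prop) p w q :
  (forall t, d t -> d' t) -> run d p w q -> run d' p w q.
Proof.
move=> H; elim: w p => [|a w IH] p //= [x [Hx Hr]].
by exists x; split; [apply: H | apply: IH].
Qed.

Lemma sat_sound (Sigma Q : finType) (A : NFA Sigma Q) w : forall u p q,
  (exists i, i \in init A /\ run (delta A) i u p) ->
  run (delta (Sat A (Srel (bw_incl A) (bw_sup A)))) p w q ->
  exists i, i \in init A /\ run (delta A) i (u ++ w) q.
Proof.
elim: w => [|a w IH] u p q Hu /=.
  by move=> Hpq; subst q; rewrite cats0.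
move=> [r [[[[p0 b] r0] Hd HS] Hr]].
move: HS => /= [Hab [Hp Hrr]]; subst b.
rewrite -cat_rcons; apply: (IH _ r) => //.
apply: Hrr.
have [i [Hi Hi0]] := Hp u Hu.
by exists i; split => //; apply: run_rcons Hi0 Hd.
Qed.

Theorem theorem10p8 (Sigma Q : finType) (A : NFA Sigma Q) :
  forall w : seq Sigma,
    lang (Sat A (Srel (bw_incl A) (bw_sup A))) w <-> lang A w.
Proof.
move=> w; split.
  move=> [p [q [Hp [Hq Hr]]]].
  have [i [Hi Hri]] := @sat_sound _ _ A w [::] p q (ex_intro _ p (conj Hp erefl)) Hr.
  by exists i, q.
move=> [p [q [Hp [Hq Hr]]]]; exists p, q; split => //; split => //.
apply: run_mono Hr => -[[x a] y] H; exists (x, a, y) => //=.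
by split => //; split => ? H'.
Qed.
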